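(* Let $p$ be a prime, $q$ a power of $p$, and $m_0 \in \mathbb{N}$. Assume that for every $k \in \mathbb{N}$ and all $d_1,\dots,d_{m_0} \in \mathbb{N}$, the set $B(p^k; d_1,\dots,d_{m_0}; 1,\dots,1)$ is an $\overline{\mathbb{F}_p}(t)$-DML set over split torus. Let $c_1,\dots,c_{m_0+1} \in \mathbb{N}$. If $B(q; c_1,\dots,c_{m_0+1}; 1,\dots,1)$ is an $\overline{\mathbb{F}_p}(t)$-DML set over split torus, then $B(q; c_1,\dots,c_{m_0}, q c_{m_0+1}; 1,\dots,1)$ is also an $\overline{\mathbb{F}_p}(t)$-DML set over split torus.
   Context: For a power $q$ of $p$, $m \in \mathbb{N}$ and $c_1,\dots,c_m \in \mathbb{N}$, $B(q; c_1,\dots,c_m; 1,\dots,1) = \{ \sum_{j=1}^m c_j q^{n_j} : n_1,\dots,n_m \in \mathbb{N}_0\}$. For a field $K$ and a quasi-projective variety $X$ over $K$, a set $S \subseteq \mathbb{N}_0$ is a $K$-DML set over $X$ if there exist an endomorphism $\Phi$ of $X$ (a morphism $X \to X$ defined over $K$), a point $\alpha \in X(K)$ and a closed subvariety $V \subseteq X$ defined over $K$ (not necessarily irreducible) such that $S = \{ n \in \mathbb{N}_0 : \Phi^n(\alpha) \in V(K)\}$. $S$ is a $K$-DML set over split torus if it is a $K$-DML set over $\mathbb{G}_m^k$ for some $k \in \mathbb{N}$. *)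

(* Defs.v *)
From HB Require Import structures.
From mathcomp Require Import all_boot all_order all_algebra all_field.
From mathcomp Require Import mpoly.
Set Implicit Arguments. Unset Strict Implicit. Unset Printing Implicit Defensive.
Import GRing.Theory.
Local Open Scope ring_scope.

Definition Bset (q m : nat) (c : 'I_m -> nat) : nat -> Prop :=
  fun s => exists n : 'I_m -> nat, s = (\sum_(j < m) c j * q ^ n j)%N.

(* A Laurent polynomial in K[x_1^{+-1},...,x_k^{+-1}] is represented as
   a pair (P, e) standing for P / (x_1 * ... * x_k)^e. *)
Definition laurent (K : fieldType) (k : nat) := ({mpoly K[k]} * nat)%type.

Definition monoAll (K : fieldType) (k : nat) : {mpoly K[k]} :=
  \prod_(i < k) 'X_i.

Definition laurent_unit (K : fieldType) (k : nat) (f : laurent K k) : Prop :=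
  exists (Q : {mpoly K[k]}) (e' : nat), f.1 * Q = monoAll K k ^+ (f.2 + e').

Definition laurent_eval (K : fieldType) (k : nat) (f : laurent K k)
  (x : 'I_k -> K) : K :=
  f.1.@[x] / (\prod_(i < k) x i) ^+ f.2.

Definition torus_point (K : fieldType) (k : nat) (x : 'I_k -> K) : Prop :=
  forall i, x i != 0.

(* An endomorphism of G_m^k over K is given by k Laurent polynomials that are
   units of the coordinate ring K[x_1^{+-1},...,x_k^{+-1}];
   its action on K-points: *)
Definition endo_apply (K : fieldType) (k : nat) (Phi : 'I_k -> laurent K k)
  (x : 'I_k -> K) : 'I_k -> K :=
  fun i => laurent_eval (Phi i) x.

(* S is a K-DML set over G_m^k: closed subvarieties of G_m^k are zero loci
   (in G_m^k) of finitely many polynomials. *)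
Definition DML_over_torus (K : fieldType) (k : nat) (S : nat -> Prop) : Prop :=
  exists (Phi : 'I_k -> laurent K k),
    (forall i, laurent_unit (Phi i)) /\
    exists alpha : 'I_k -> K, torus_point alpha /\
    exists V : seq {mpoly K[k]},
      forall n : nat,
        S n <-> (forall g, g \in V -> g.@[iter n (endo_apply Phi) alpha] = 0).

Definition DML_split_torus (K : fieldType) (S : nat -> Prop) : Prop :=
  exists k : nat, (0 < k)%N /\ DML_over_torus K k S.

(* F is an algebraic closure of F_p: algebraically closed, of characteristic p,
   and algebraic over its prime subfield. *)
Definition algebraic_over_prime_field (F : fieldType) : Prop :=
  forall x : F, exists P : {poly F},
    P != 0 /\ (forall i, exists a : nat, P`_i = a%:R) /\ root P x.

Definition ratfun (F : fieldType) : fieldType := {fraction {poly F}}.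

(* Main.v *)
Require Import Defs.
From HB Require Import structures.
From mathcomp Require Import all_boot all_order all_algebra all_field.
From mathcomp Require Import mpoly.
From mathcomp Require Import ring zify.
From Stdlib Require Import FunctionalExtensionality Classical.
Import GRing.Theory.
Local Open Scope ring_scope.

Set Implicit Arguments. Unset Strict Implicit.


Section Base.
Variable K : fieldType.

Definition realizable k (f : ('I_k -> K) -> K) :=
  exists L : laurent K k, laurent_unit L /\
    forall x, torus_point x -> laurent_eval L x = f x.

Definition polyfun k (g : ('I_k -> K) -> K) :=
  exists P : {mpoly K[k]}, forall x, P.@[x] = g x.

Lemma monoAll_eval k (x : 'I_k -> K) : (monoAll K k).@[x] = \prod_i x i.
Proof. by rewrite /monoAll rmorph_prod; apply: eq_bigr => i _ /=; apply: mevalXU. Qed.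

Lemma prod_nz k (x : 'I_k -> K) : torus_point x -> \prod_i x i != 0.
Proof. by move=> hx; rewrite prodf_seq_neq0; apply/allP => i _; apply: hx. Qed.

Lemma realizable_nz k f x : @realizable k f -> torus_point x -> f x != 0.
Proof.
move=> [[P e] [[Q [e' /= hPQ]] hL]] hx; rewrite -hL //.
rewrite /laurent_eval /= mulf_neq0 ?invr_neq0 ?expf_neq0 ?prod_nz //.
have := congr1 (meval x) hPQ; rewrite mevalM rmorphXn /= monoAll_eval => h.
apply/eqP => h0; move: h; rewrite h0 mul0r => /esym/eqP; rewrite expf_eq0.
by rewrite (negbTE (prod_nz hx)) andbF.
Qed.

Lemma realizable_ext k (f g : ('I_k -> K) -> K) :
  (forall x, f x = g x) -> realizable f -> realizable g.
Proof. by move=> e [L [u h]]; exists L; split => // x hx; rewrite h. Qed.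

Lemma polyfun_ext k (f g : ('I_k -> K) -> K) :
  (forall x, f x = g x) -> polyfun f -> polyfun g.
Proof. by move=> e [P h]; exists P => x; rewrite h. Qed.

Lemma comp_X_eval k1 k2 (σ : 'I_k1 -> 'I_k2) (P : {mpoly K[k1]}) y :
  (P \mPo [tuple 'X_(σ i) | i < k1]).@[y] = P.@[fun i => y (σ i)].
Proof.
by rewrite comp_mpoly_meval; apply: meval_eq => i /=; rewrite tnth_mktuple mevalXU.
Qed.

Lemma reindex_polyfun k1 k2 (σ : 'I_k1 -> 'I_k2) g :
  polyfun g -> polyfun (fun y : 'I_k2 -> K => g (fun i => y (σ i))).
Proof.
move=> [P hP]; exists (P \mPo [tuple 'X_(σ i) | i < k1]) => y.
by rewrite comp_X_eval hP.
Qed.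

Lemma polyfun_const k c : polyfun (fun _ : 'I_k -> K => c).
Proof. by exists c%:MP => x; rewrite mevalC. Qed.

Lemma polyfun_proj k j : polyfun (fun x : 'I_k -> K => x j).
Proof. by exists 'X_j => x; rewrite mevalXU. Qed.

Lemma polyfun_mul k f g : polyfun f -> polyfun g ->
  polyfun (fun x : 'I_k -> K => f x * g x).
Proof. by move=> [P hP] [Q hQ]; exists (P * Q) => x; rewrite mevalM hP hQ. Qed.

Lemma polyfun_sub k f g : polyfun f -> polyfun g ->
  polyfun (fun x : 'I_k -> K => f x - g x).
Proof. by move=> [P hP] [Q hQ]; exists (P - Q) => x; rewrite mevalB hP hQ. Qed.


Lemma compX_rmorph k1 k2 (σ : 'I_k1 -> 'I_k2) :
  let c := comp_mpoly [tuple ('X_(σ i) : {mpoly K[k2]}) | i < k1] in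
  (forall P Q, c (P * Q) = c P * c Q) /\ (forall P n, c (P ^+ n) = c P ^+ n)
  /\ c (monoAll K k1) = \prod_i 'X_(σ i).
Proof.
move=> c; split; first by move=> P Q; rewrite /c rmorphM.
split; first by move=> P n; rewrite /c rmorphXn.
rewrite /c /monoAll rmorph_prod; apply: eq_bigr => i _.
by apply: (etrans (comp_mpolyXU _ _)); rewrite -tnth_nth tnth_mktuple.
Qed.

Lemma monoAll_split k1 k2 (σ : 'I_k1 -> 'I_k2) : injective σ ->
  exists R : {mpoly K[k2]}, (\prod_i 'X_(σ i)) * R = monoAll K k2.
Proof.
move=> inj; exists (\prod_(j | j \notin σ @: setT) 'X_j).
rewrite /monoAll [RHS](bigID (mem (σ @: setT))) /=; congr (_ * _).
rewrite big_imset /=; last by move=> a b _ _; apply: inj.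
by apply: eq_bigl => i; rewrite in_setT.
Qed.

Lemma reindex_realizable k1 k2 (σ : 'I_k1 -> 'I_k2) f : injective σ ->
  realizable f -> realizable (fun y : 'I_k2 -> K => f (fun i => y (σ i))).
Proof.
move=> inj [[P e] [[Q [e' /= hPQ]] hL]].
have [R hR] := monoAll_split inj.
have [cM [cX cA]] := compX_rmorph σ.
set c := comp_mpoly _ in cM cX cA.
exists (c P * R ^+ e, e); split.
  exists (c Q * R ^+ e') => /=; exists e'.
  rewrite -hR exprMn -cA -cX -hPQ cM.
  by rewrite !exprD; ring.
move=> y hy; rewrite -hL; last by move=> i; apply: hy.
rewrite /laurent_eval /= mevalM rmorphXn /= /c comp_X_eval.
have := congr1 (meval y) hR; rewrite mevalM monoAll_eval => <-.
rewrite -cA /c comp_X_eval monoAll_eval.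
have hRn : R.@[y] != 0.
  apply/eqP => h0; have := congr1 (meval y) hR.
  by rewrite mevalM h0 mulr0 monoAll_eval => /esym/eqP; rewrite (negbTE (prod_nz hy)).
by rewrite exprMn invfM mulrACA divff ?mulr1 // expf_neq0.
Qed.

Lemma proj_realizable k (j : 'I_k) : realizable (fun x : 'I_k -> K => x j).
Proof.
have h1 : realizable (fun x : 'I_1 -> K => x ord0).
  exists ('X_ord0, 0%N); split.
    by exists 1, 1%N; rewrite /= mulr1 add0n expr1 /monoAll big_ord1.
  by move=> x _; rewrite /laurent_eval /= expr0 invr1 mulr1 mevalXU.
have := @reindex_realizable 1 k (fun _ => j) _ _ h1; apply.
by move=> a b _; rewrite (ord1 a) (ord1 b).
Qed.

End Base.

Set Implicit Arguments. Unset Strict Implicit.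


Section ILevel.
Variable K : fieldType.

Definition realI (I : finType) (f : (I -> K) -> K) :=
  realizable (fun y : 'I_#|I| -> K => f (fun i => y (enum_rank i))).
Definition polyI (I : finType) (f : (I -> K) -> K) :=
  polyfun (fun y : 'I_#|I| -> K => f (fun i => y (enum_rank i))).
Definition torusI (I : finType) (x : I -> K) := forall i, x i != 0.

Lemma realI_proj (I : finType) (i : I) : realI (fun x : I -> K => x i).
Proof. exact: proj_realizable. Qed.

Lemma realI_reindex (I1 I2 : finType) (σ : I1 -> I2) f : injective σ ->
  realI f -> realI (fun x : I2 -> K => f (fun i => x (σ i))).
Proof.
move=> inj h.
have := @reindex_realizable K _ _ (fun r => enum_rank (σ (enum_val r))) _ _ h.
move=> /(_ _) h2; apply: realizable_ext (h2 _) => [y|].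
  by congr f; apply: functional_extensionality => i; rewrite enum_rankK.
by move=> a b /enum_rank_inj /inj /enum_val_inj.
Qed.

Lemma realI_nz (I : finType) f (x : I -> K) : realI f -> torusI x -> f x != 0.
Proof.
move=> h hx; have := @realizable_nz K _ _ (fun r => x (enum_val r)) h.
have -> : (fun i => x (enum_val (enum_rank i))) = x.
  by apply: functional_extensionality => i; rewrite enum_rankK.
by apply => r; apply: hx.
Qed.

Lemma polyI_reindex (I1 I2 : finType) (σ : I1 -> I2) f :
  polyI f -> polyI (fun x : I2 -> K => f (fun i => x (σ i))).
Proof.
move=> h; have := @reindex_polyfun K _ _ (fun r => enum_rank (σ (enum_val r))) _ h.
apply: polyfun_ext => y.
by congr f; apply: functional_extensionality => i; rewrite enum_rankK.
Qed.

Lemma polyI_const (I : finType) c : polyI (fun _ : I -> K => c).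
Proof. exact: polyfun_const. Qed.
Lemma polyI_proj (I : finType) i : polyI (fun x : I -> K => x i).
Proof. exact: polyfun_proj. Qed.
Lemma polyI_mul (I : finType) f g : polyI f -> polyI g ->
  polyI (fun x : I -> K => f x * g x).
Proof. exact: polyfun_mul. Qed.
Lemma polyI_sub (I : finType) f g : polyI f -> polyI g ->
  polyI (fun x : I -> K => f x - g x).
Proof. exact: polyfun_sub. Qed.

Definition DMLI (S : nat -> Prop) :=
  exists (I : finType) (Phi : (I -> K) -> I -> K) (a : I -> K)
         (J : finType) (V : J -> (I -> K) -> K),
  [/\ (0 < #|I|)%N, forall i, realI (fun x => Phi x i), torusI a,
      forall j, polyI (V j) &
      forall n, S n <-> forall j, V j (iter n Phi a) = 0].

Lemma iter_torus (I : finType) (Phi : (I -> K) -> I -> K) a n :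
  (forall i, realI (fun x => Phi x i)) -> torusI a -> torusI (iter n Phi a).
Proof.
move=> hP ha; elim: n => [|n IH] //= i; exact: (realI_nz (hP i) IH).
Qed.

Lemma DMLI_ext (S S' : nat -> Prop) : (forall n, S n <-> S' n) -> DMLI S -> DMLI S'.
Proof.
move=> e [I [Phi [a [J [V [h1 h2 h3 h4 h5]]]]]].
by exists I, Phi, a, J, V; split => // n; rewrite -e.
Qed.

Lemma DML_to_I S : DML_split_torus K S -> DMLI S.
Proof.
move=> [k [hk [Phi [hu [al [hal [V hV]]]]]]].
exists (ordinal k), (endo_apply Phi), al, (ordinal (size V)),
  (fun (j : ordinal (size V)) x => (nth 0 V j).@[x]); split.
- by rewrite card_ord.
- move=> i; apply: (@reindex_realizable K _ _ enum_rank); first exact: enum_rank_inj.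
  by exists (Phi i).
- exact: hal.
- move=> j; apply: reindex_polyfun; by exists (nth 0 V j).
- move=> n; rewrite hV; split => h.
    by move=> j; apply: h; rewrite mem_nth.
  move=> g /(nthP 0) [i hi <-]; exact: (h (Ordinal hi)).
Qed.


Lemma I_to_DML S : DMLI S -> DML_split_torus K S.
Proof.
move=> [I [Phi [a [J [V [hI hP ha hV hS]]]]]].
have [Lf hLf] := fin_all_exists hP.
have [Pf hPf] := fin_all_exists hV.
exists #|I|; split => //.
exists (fun r => Lf (enum_val r)); split.
  by move=> r; case: (hLf (enum_val r)).
exists (fun r => a (enum_val r)); split; first by move=> r; apply: ha.
exists [seq Pf j | j <- enum J] => n.
have eit : iter n (endo_apply (fun r => Lf (enum_val r))) (fun r => a (enum_val r))
         = fun r => iter n Phi a (enum_val r).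
  elim: n {hS} => [//|n IH] /=; rewrite IH.
  apply: functional_extensionality => r; rewrite /endo_apply.
  case: (hLf (enum_val r)) => _ ->; last by move=> r'; apply: iter_torus.
  by congr Phi; apply: functional_extensionality => i; rewrite enum_rankK.
rewrite eit hS; split => h.
  move=> g /mapP [j _ ->]; rewrite hPf -[RHS](h j); congr (V j).
  by apply: functional_extensionality => i; rewrite enum_rankK.
move=> j; have := h (Pf j) (map_f _ (mem_enum _ j)); rewrite hPf => <-.
by congr (V j); apply: functional_extensionality => i; rewrite enum_rankK.
Qed.

End ILevel.

Set Implicit Arguments. Unset Strict Implicit.


Section Constr.
Variable K : fieldType.

Lemma DMLI_union (S1 S2 : nat -> Prop) :
  DMLI K S1 -> DMLI K S2 -> DMLI K (fun n => S1 n \/ S2 n).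
Proof.
move=> [I1 [P1 [a1 [J1 [V1 [hI1 hP1 ha1 hV1 hS1]]]]]].
move=> [I2 [P2 [a2 [J2 [V2 [hI2 hP2 ha2 hV2 hS2]]]]]].
pose comp (s : (I1 + I2)%type) : ((I1 + I2)%type -> K) -> K :=
  match s with
  | inl i => fun x => P1 (fun i' => x (inl i')) i
  | inr i => fun x => P2 (fun i' => x (inr i')) i end.
pose Phi x s := comp s x.
pose a (s : (I1 + I2)%type) := match s with inl i => a1 i | inr i => a2 i end.
have eit : forall n, (fun i => iter n Phi a (inl i)) = iter n P1 a1 /\
                     (fun i => iter n Phi a (inr i)) = iter n P2 a2.
  elim => [|n [IH1 IH2]] /=; first by split; apply: functional_extensionality.
  by rewrite -IH1 -IH2.
exists ((I1 + I2)%type : finType), Phi, a, ((J1 * J2)%type : finType),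
  (fun jj x => V1 jj.1 (fun i => x (inl i)) * V2 jj.2 (fun i => x (inr i))).
split.
- by rewrite card_sum addn_gt0 hI1.
- case => i.
    by apply: (realI_reindex (f := fun x => P1 x i)) => [? ? []|].
  by apply: (realI_reindex (f := fun x => P2 x i)) => [? ? []|].
- by case => i /=; [apply: ha1 | apply: ha2].
- by move=> [j1 j2]; apply: polyI_mul; apply: polyI_reindex.
- move=> n; have [e1 e2] := eit n; rewrite e1 e2 hS1 hS2; split.
    by case=> h [j1 j2] /=; rewrite h ?mul0r ?mulr0.
  move=> h; case: (classic (forall j, V1 j (iter n P1 a1) = 0)) => [|h1]; first by left.
  have [j1 hj1] := not_all_ex_not _ _ h1.
  right => j2; have /eqP := h (j1, j2); rewrite mulf_eq0 => /orP [/eqP //|/eqP //].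
Qed.


Lemma DMLI_image (w : K) (S : nat -> Prop) (a b : nat) :
  w != 0 -> w != 1 -> (0 < a)%N ->
  DMLI K S -> DMLI K (fun N => exists n, S n /\ N = (a * n + b)%N).
Proof.
move=> hw0 hw1 ha [I [P [al [J [V [hI hP hal hV hS]]]]]].
pose L := (b + a.-1).+1.
pose rb : 'I_L := inord b.
have hbL : (b < L)%N by rewrite ltnS leq_addr.
pose T := ('I_L * option I)%type.
pose comp (p : T) : (T -> K) -> K :=
  if (p.1.+1 < L)%N then (fun Y => Y (inord p.1.+1, p.2))
  else match p.2 with
       | Some i => fun Y => P (fun i' => Y (rb, Some i')) i
       | None => fun Y => Y (rb, None) end.
pose Phi Y p := comp p Y.
pose al' (p : T) := match p.2 with
                    | Some i => al i
                    | None => if p.1 == b :> nat then 1 else w end.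
pose sig (j : nat) (o : option I) : K :=
  if (j < b)%N then match o with Some i => al i | None => w end
  else match o with
       | Some i => iter ((j - b) %/ a)%N P al i
       | None => if ((j - b) %% a)%N == 0%N then 1 else w end.
have eit : forall N (r : 'I_L) o, iter N Phi al' (r, o) = sig (N + r)%N o.
  elim => [|N IH] r o /=.
    rewrite /al' /sig /= add0n; have hr : (r - b < a)%N.
      by have := ltn_ord r; rewrite /L; lia.
    case: ltnP => hrb.
      by case: o => //; rewrite (ltn_eqF hrb).
    case: o => [i|]; first by rewrite divn_small.
    by rewrite modn_small // subn_eq0 eqn_leq hrb andbT.
  rewrite /Phi /comp /=; case: ifP => hrL.
    by rewrite IH inordK // addnS addSn.
  have er : nat_of_ord r = (b + a.-1)%N.
    by apply/eqP; rewrite eqn_leq -ltnS ltn_ord /= -ltnS; move/negbT: hrL; rewrite -leqNgt.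
  have eN : (N.+1 + r = (N + b) + a)%N by rewrite er; lia.
  have hNb : ((N + b) < b)%N = false by rewrite ltnNge leq_addl.
  have hNab : ~~ (N + b + a < b)%N by rewrite -leqNgt; lia.
  rewrite eN /sig (negbTE hNab) (addnAC N b a) addnK.
  case: o => [i|] /=.
    rewrite (divnDr _ (dvdnn a)) divnn ha addn1 /=.
    congr (P _ i); apply: functional_extensionality => i'.
    by rewrite IH inordK // /sig hNb addnK.
  by rewrite IH inordK // /sig hNb addnK modnDr.
pose V' (jo : option J) : (T -> K) -> K :=
  match jo with
  | Some j => fun Y => V j (fun i => Y (ord0, Some i))
  | None => fun Y => Y (ord0, None) - 1 end.
exists (T : finType), Phi, al', (option J : finType), V'; split.
- by rewrite card_prod card_option card_ord.
- move=> [r o]; rewrite /Phi /comp /=; case: ifP => _; first exact: realI_proj.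
  case: o => [i|]; last exact: realI_proj.
  by apply: (realI_reindex (f := fun x => P x i)) => // ? ? [].
- move=> [r [i|]] /=; rewrite /al' /=; first exact: hal.
  by case: ifP => _; rewrite ?oner_neq0.
- case => [j|] /=.
    exact: (@polyI_reindex K I T (fun i => (ord0, Some i)) (V j) (hV j)).
  by apply: polyI_sub; [apply: polyI_proj | apply: polyI_const].
have e0 : forall M o, iter M Phi al' (ord0, o) = sig M o.
  by move=> M o; rewrite eit addn0.
move=> N.
split.
  move=> [n [hn ->]] [j|] /=.
    have -> : (fun i => iter (a * n + b) Phi al' (ord0, Some i)) = iter n P al.
      apply: functional_extensionality => i; rewrite e0 /sig.
      by rewrite ltnNge leq_addl /= addnK mulKn.
    by move: hn; rewrite hS; apply.
  by rewrite e0 /sig ltnNge leq_addl /= addnK mulnC modnMl eqxx subrr.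
move=> h; have := h None; rewrite /= e0 /sig.
case: ltnP => hbN; first by move/eqP; rewrite subr_eq0 (negbTE hw1).
case: eqP => hm; last by move/eqP; rewrite subr_eq0 (negbTE hw1).
move=> _; exists ((N - b) %/ a)%N; split.
  rewrite hS => j; have := h (Some j); rewrite /=.
  have -> : (fun i => iter N Phi al' (ord0, Some i)) = iter ((N - b) %/ a)%N P al.
    by apply: functional_extensionality => i; rewrite e0 /sig ltnNge hbN.
  by [].
by rewrite mulnC divnK ?subnK //; apply/dvdnP; exists ((N - b) %/ a)%N; rewrite {1}(divn_eq (N - b) a) hm addn0.
Qed.


End Constr.

Set Implicit Arguments. Unset Strict Implicit.


Section Decomp.
Local Open Scope nat_scope.

Definition dd (q m0 : nat) (c : 'I_m0.+1 -> nat) (i : 'I_m0) : 'I_m0 -> nat :=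
  fun j => if j == i then q * c ord_max else c (widen_ord (leqnSn m0) j).

Lemma widen_neq_max m0 (j : 'I_m0) : (widen_ord (leqnSn m0) j == ord_max) = false.
Proof. by rewrite -val_eqE /= ltn_eqF. Qed.

Lemma Tdecomp (q m0 : nat) (c : 'I_m0.+1 -> nat) N :
  Bset q (fun j : 'I_m0.+1 => if j == ord_max then (q * c j)%N else c j) N <->
  (exists n, Bset q c n /\ N = q * n + 0) \/
  exists i : 'I_m0, exists n, Bset q (dd q c i) n /\
     N = 1 * n + c (widen_ord (leqnSn m0) i).
Proof.
split.
  move=> [n ->].
  case: (boolP [exists j, (j != ord_max) && (n j == 0)]).
    move=> /existsP [j /andP [hj /eqP hn0]].
    have hjm : j < m0 by move: hj; rewrite -val_eqE /= => hj; have := ltn_ord j; lia.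
    pose i : 'I_m0 := Ordinal hjm.
    have hwi : widen_ord (leqnSn m0) i = j by apply: val_inj.
    right; exists i.
    pose n' (k : 'I_m0) := if k == i then n ord_max else n (widen_ord (leqnSn m0) k).
    exists (\sum_(k < m0) dd q c i k * q ^ n' k); split; first by exists n'.
    have hmax : (ord_max == ord_max :> 'I_m0.+1) = true := eqxx _.
    rewrite big_ord_recr /= hmax (bigD1 i) //= [X in _ = 1 * X + _](bigD1 i) //=.
    rewrite /dd /n' eqxx hwi hn0 (negbTE hj).
    have -> : \sum_(k < m0 | k != i) (if k == i then q * c ord_max else c (widen_ord (leqnSn m0) k)) *
                q ^ (if k == i then n ord_max else n (widen_ord (leqnSn m0) k)) =
              \sum_(k < m0 | k != i) (if widen_ord (leqnSn m0) k == ord_max then q * c (widen_ord (leqnSn m0) k)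
                      else c (widen_ord (leqnSn m0) k)) * q ^ n (widen_ord (leqnSn m0) k).
      by apply: eq_bigr => k hk; rewrite (negbTE hk) widen_neq_max.
    rewrite expn0 muln1 mul1n -addnA [RHS]addnC; congr (_ + _); rewrite addnC; reflexivity.
  rewrite negb_exists => /forallP hall.
  left; exists (\sum_j c j * q ^ (if j == ord_max then n j else (n j).-1)); split.
    by eexists.
  rewrite addn0 big_distrr /=; apply: eq_bigr => j _.
  case: eqP => [_|/eqP hj]; first by rewrite mulnA.
  have := hall j; rewrite hj /= => hn.
  by case: (n j) hn => // k _; rewrite expnS /=; lia.
case.
  move=> [n0 [[n hn] ->]].
  exists (fun j => if j == ord_max then n j else (n j).+1).
  rewrite addn0 hn big_distrr /=; apply: eq_bigr => j _.
  by case: eqP => _; rewrite ?expnS; lia.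
move=> [i [n0 [[n hn] ->]]].
exists (fun j => match unlift ord_max j with
                 | Some j' => if j' == i then 0 else n j'
                 | None => n i end).
rewrite hn big_ord_recr /= unlift_none.
have hu : forall k : 'I_m0, unlift ord_max (widen_ord (leqnSn m0) k) = Some k.
  move=> k; have -> : widen_ord (leqnSn m0) k = lift ord_max k.
    by apply: val_inj => /=; rewrite /bump leqNgt ltn_ord.
  by rewrite liftK.
have hmax : (ord_max == ord_max :> 'I_m0.+1) = true := eqxx _.
rewrite (bigD1 i) //= [in RHS](bigD1 i) //= hu widen_neq_max /dd eqxx expn0 hmax.
rewrite [in RHS](eq_bigr (fun k => (if k == i then q * c ord_max
     else c (widen_ord (leqnSn m0) k)) * q ^ n k)); last first.
  by move=> k hk; rewrite hu (negbTE hk) widen_neq_max.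
rewrite muln1 mul1n [LHS]addnC -[RHS]addnA; congr (_ + _); rewrite [RHS]addnC; reflexivity.
Qed.

End Decomp.

Unset Implicit Arguments. Set Strict Implicit.

Lemma DMLI_bigunion (K : fieldType) m (S0 : nat -> Prop) (P : 'I_m -> nat -> Prop) :
  DMLI K S0 -> (forall i, DMLI K (P i)) ->
  DMLI K (fun N => S0 N \/ exists i, P i N).
Proof.
move=> h0 hP.
suff : forall n, (n <= m)%N ->
  DMLI K (fun N => S0 N \/ exists i : 'I_m, (i < n)%N /\ P i N).
  move=> /(_ m (leqnn m)); apply: DMLI_ext => N; split.
    by case=> [|[i [_ h]]]; [left | right; exists i].
  by case=> [|[i h]]; [left | right; exists i; split].
elim => [_|n IH hn].
  by apply: DMLI_ext h0 => N; split; [left | case=> // [[i []]]].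
have := DMLI_union (IH (ltnW hn)) (hP (Ordinal hn)).
apply: DMLI_ext => N; split.
  case=> [[|[i [hi h]]]|h]; [by left| |].
    by right; exists i; split => //; apply: ltnW.
  by right; exists (Ordinal hn); split.
case=> [h|[i [hi h]]]; first by left; left.
move: hi; rewrite ltnS leq_eqVlt => /orP [/eqP hi|hi].
  right; have e : i = Ordinal hn by apply: val_inj.
  by rewrite -e.
by left; right; exists i.
Qed.

Theorem lemma3p4 (p : nat) (F : closedFieldType) (q m0 : nat)
  (c : 'I_m0.+1 -> nat) :
  prime p -> p \in [pchar F] -> algebraic_over_prime_field F ->
  (exists e : nat, (0 < e)%N /\ q = (p ^ e)%N) ->
  (0 < m0)%N ->
  (forall k : nat, (0 < k)%N -> forall d : 'I_m0 -> nat,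
      (forall j, 0 < d j)%N ->
      DML_split_torus (ratfun F) (Bset (p ^ k) d)) ->
  (forall j, 0 < c j)%N ->
  DML_split_torus (ratfun F) (Bset q c) ->
  DML_split_torus (ratfun F)
    (Bset q (fun j : 'I_m0.+1 => if j == ord_max then (q * c j)%N else c j)).
Proof.
move=> hp _ _ [e [he hq]] _ Hyp hc HS.
pose w : ratfun F := tofrac ('X : {poly F}).
have hw0 : w != 0 by rewrite /w tofrac_eq0 polyX_eq0.
have hw1 : w != 1.
  rewrite /w -tofrac1 tofrac_eq; apply/eqP => h.
  by have := congr1 (fun r : {poly F} => size r) h; rewrite size_polyX size_poly1.
have hq0 : (0 < q)%N by rewrite hq expn_gt0 prime_gt0.
apply: I_to_DML.
have Hyp' : forall d : 'I_m0 -> nat, (forall j, 0 < d j)%N ->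
    DML_split_torus (ratfun F) (Bset q d).
  by move=> d hdd; rewrite hq; exact: Hyp.
have hd : forall i j, (0 < dd q c i j)%N.
  by move=> i j; rewrite /dd; case: eqP => _; rewrite ?muln_gt0 ?hq0 hc.
have := @DMLI_bigunion _ _ _ _ (@DMLI_image _ w _ q 0 hw0 hw1 hq0 (DML_to_I HS))
  (fun i => @DMLI_image _ w _ 1 (c (widen_ord (leqnSn m0) i)) hw0 hw1 (ltn0Sn 0)
     (DML_to_I (Hyp' (dd q c i) (hd i)))).
apply: DMLI_ext => N; rewrite Tdecomp; split.
  by case=> [h|[i h]]; [left | right; exists i].
by case=> [h|[i h]]; [left | right; exists i].
Qed.
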